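(* In any execution of Algorithm FS (with $T\ge 4$), let $v,w$ be active neighboring nodes in round $t$ with $d_t(v,w)\le 1$, and let $t'>t$ be the first round with $d_{t'}(v,w)>1$. Then $d_{t'+1}(v,w)\le 1$.
   Context: Model (beeping model with arbitrary activations). $G=(V,E)$ finite connected undirected graph; synchronous rounds; in each round each active node either beeps or listens; a listening node learns only whether at least one neighbor beeped. $T\ge 4$; checkpoints $\mathit{CP}=\{c\in\mathbb{N}_0: c\equiv 0\pmod 4,\ T-c>3\}$. Algorithm FS. Each node $v$ stores $\delta(v)\in\{0,\dots,T-1\}$, $\mathit{State}(v)\in\{\mathit{Inactive},\mathit{Beep},\mathit{Listen}\}$, $\mathit{Induced}(v)\in\{\mathit{true},\mathit{false}\}$. Initially all nodes are Inactive. A node $v$ is activated in round $t$ if the adversary activates it in round $t$, or $v$ is inactive and some neighbor beeps in round $t-1$; then at the beginning of round $t$, $\delta(v)=1$, $\mathit{State}(v)=\mathit{Beep}$, $\mathit{Induced}(v)=\mathit{true}$. In each round each active node $v$, according to its state at the beginning of the round: (1) if $\mathit{State}(v)=\mathit{Beep}$: beeps; $\delta(v)\gets\delta(v)+1\bmod T$; $\mathit{State}(v)\gets\mathit{Listen}$; (2) if $\mathit{State}(v)=\mathit{Listen}$ and some neighbor beeps: if $\delta(v)\equiv c-1\pmod T$ for some $c\in\mathit{CP}$, then $\delta(v)\gets\delta(v)+2\bmod T$, $\mathit{State}(v)\gets\mathit{Beep}$, $\mathit{Induced}(v)\gets\mathit{true}$; else $\delta(v)\gets\delta(v)+1\bmod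 T$; (3) if $\mathit{State}(v)=\mathit{Listen}$ and no neighbor beeps: $\delta(v)\gets\delta(v)+1\bmod T$; then if ($\mathit{Induced}(v)=\mathit{true}$ and new $\delta(v)\in\mathit{CP}$) or new $\delta(v)=0$: $\mathit{State}(v)\gets\mathit{Beep}$, $\mathit{Induced}(v)\gets\mathit{false}$. Virtual counter: if $v$ is activated in round $t_0$ then $c_{t_0}(v)=0$, and $c_{t+1}(v)=c_t(v)+a$, where $a\in\{1,2\}$ is the amount added to $\delta(v)$ (before reduction mod $T$) in round $t$. $d_t(v,w)=|c_t(v)-c_t(w)|$. *)

(* Defs.v *)
From mathcomp Require Import all_boot.
Set Implicit Arguments. Unset Strict Implicit. Unset Printing Implicit Defensive.

Inductive fstate := Beep | Listen.

(* State of an active node: delta(v) (kept in {0..T-1}), State(v),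
   Induced(v), and the virtual counter c(v). *)
Record node := mkNode { delta : nat; st : fstate; induced : bool; cnt : nat }.

Definition inCP (T c : nat) : bool := (c %% 4 == 0) && (c + 3 < T).

Definition init_node : node := mkNode 1 Beep true 0.

(* One round of Algorithm FS for an active node; [heard] = some neighbor
   beeps in this round. The counter is increased by the amount added to delta. *)
Definition fs_step (T : nat) (s : node) (heard : bool) : node :=
  match st s with
  | Beep => mkNode ((delta s + 1) %% T) Listen (induced s) (cnt s + 1)
  | Listen =>
    if heard then
      if [exists c : 'I_T, inCP T c && ((delta s + 1) %% T == c)] then
        mkNode ((delta s + 2) %% T) Beep true (cnt s + 2)
      else mkNode ((delta s + 1) %% T) Listen (induced s) (cnt s + 1)
    else
      let d' := (delta s + 1) %% T in
      if (induced s && inCP T d') || (d' == 0) then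
        mkNode d' Beep false (cnt s + 1)
      else mkNode d' Listen (induced s) (cnt s + 1)
  end.

Definition beeping (o : option node) : bool :=
  if o is Some s then (if st s is Beep then true else false) else false.

Section Exec.
Variables (T : nat) (V : finType) (e : rel V) (adv : nat -> V -> bool).

(* [config t v] = state of v at the beginning of round t (None = Inactive).
   [adv t v] = the adversary activates v in round t (no effect on an
   already active node). *)
Fixpoint config (t : nat) : V -> option node :=
  match t with
  | 0 => fun v => if adv 0 v then Some init_node else None
  | t'.+1 =>
    let prev := config t' in
    let beeped := fun v => [exists u, e v u && beeping (prev u)] in
    fun v =>
      match prev v with
      | Some s => Some (fs_step T s (beeped v))
      | None => if adv t v || beeped v then Some init_node else None
      end
  end.

Definition active (t : nat) (v : V) : bool := if config t v is Some _ then true else false.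

(* Virtual counter c_t(v) (meaningful only for active v). *)
Definition vcounter (t : nat) (v : V) : nat :=
  if config t v is Some s then cnt s else 0.

Definition dist (t : nat) (v w : V) : nat :=
  (vcounter t v - vcounter t w) + (vcounter t w - vcounter t v).
End Exec.

(* Main.v *)
Require Import Defs.
From mathcomp Require Import all_boot.
From mathcomp Require Import zify.

Lemma fs_cnt T s h : cnt (fs_step T s h) = cnt s + 1 \/ cnt (fs_step T s h) = cnt s + 2.
Proof.
rewrite /fs_step; case: (st s); first by left.
case: h; first by case: ifP => _; [right|left].
by case: ifP => _; left.
Qed.

Lemma fs_delta T s h : delta s = (cnt s + 1) %% T ->
  delta (fs_step T s h) = (cnt (fs_step T s h) + 1) %% T.
Proof.
move=> ds; have E1 : (delta s + 1) %% T = (cnt s + 1 + 1) %% T by rewrite ds modnDml.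
have E2 : (delta s + 2) %% T = (cnt s + 2 + 1) %% T.
  by rewrite ds modnDml -!addnA.
rewrite /fs_step; case: (st s) => /=; first by [].
case: h; first by case: ifP.
by case: ifP.
Qed.

Lemma arith T r : 4 <= T -> r < T -> inCP T ((r + 1) %% T) ->
  ~~ inCP T r && (r != 0).
Proof.
move=> hT hr; rewrite /inCP.
have [h|h] : r + 1 < T \/ r + 1 = T by lia.
  rewrite (modn_small h); move/andP=> [/eqP h1 h2]; apply/andP; split; last by lia.
  apply/negP => /andP [/eqP h3 _]; lia.
rewrite h modnn => /andP [_ h2]; lia.
Qed.

Lemma key T sa sb ha hb (hb' x : bool) : 4 <= T ->
  delta sa = (cnt sa + 1) %% T -> delta sb = (cnt sb + 1) %% T ->
  cnt sa = (cnt sb).+1 ->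
  cnt (fs_step T sa ha) = cnt sa + 2 -> cnt (fs_step T sb hb) = cnt sb + 1 ->
  (st (fs_step T sa ha) = Beep -> hb') ->
  cnt (fs_step T (fs_step T sa ha) x) = cnt sa + 3 /\
  cnt (fs_step T (fs_step T sb hb) hb') = cnt sb + 3.
Proof.
move=> hT da db hab Ha Hbb.
have [Hst [-> E]] : st sa = Listen /\ ha = true /\
    [exists c : 'I_T, inCP T c && ((delta sa + 1) %% T == c)].
  move: Ha; rewrite /fs_step; case: (st sa) => /=; first by lia.
  case: ha; last by case: ifP => /= _; lia.
  by case: ifP => /= E; [|lia].
have Ea : fs_step T sa true = mkNode ((delta sa + 2) %% T) Beep true (cnt sa + 2).
  by rewrite /fs_step Hst E.
move=> Hb'; rewrite Ea in Hb'; have Hb := Hb' erefl; rewrite Hb Ea.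
split; first by rewrite /fs_step /=; lia.
move: Hbb.
move/existsP: E => [c /andP [hc /eqP hc2]].
have Hc : ((cnt sb + 2) %% T + 1) %% T = c.
  by rewrite -hc2 da modnDml hab modnDml; congr (_ %% _); lia.
have Hex : [exists c0 : 'I_T, inCP T c0 && (((cnt sb + 2) %% T + 1) %% T == c0)].
  by apply/existsP; exists c; rewrite hc Hc eqxx.
have db2 : (delta sb + 1) %% T = (cnt sb + 2) %% T by rewrite db modnDml -addnA.
rewrite /fs_step; case: (st sb) => /=.
  move=> _; by rewrite db2 Hex /=; lia.
case: hb => /=.
  case: ifP => /= _; first by lia.
  by rewrite db2 Hex /=; lia.
have hT0 : 0 < T by lia.
move: (arith _ _ hT (ltn_pmod (cnt sb + 2) hT0)); rewrite Hc hc => /(_ isT) /andP [h1 h2].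
move=> _; cbv zeta; rewrite db2 (negbTE h1) (negbTE h2) andbF /= Hex /=; lia.
Qed.

Set Implicit Arguments. Unset Strict Implicit.
Lemma cfg_next T (V : finType) e adv t (u : V) sx : config T e adv t u = Some sx ->
  config T e adv t.+1 u = Some (fs_step T sx [exists x, e u x && beeping (config T e adv t x)]).
Proof. by move=> H; rewrite /= H. Qed.

Lemma cfg_mono T (V : finType) e adv t k (u : V) : active T e adv t u -> active T e adv (t + k) u.
Proof.
elim: k => [|k IH]; first by rewrite addn0.
move/IH; rewrite /active addnS; case E: (config _ _ _ _ u) => [sx|] // _.
by rewrite (cfg_next E).
Qed.

Lemma cfg_inv T (V : finType) e adv t (u : V) sx : 4 <= T -> config T e adv t u = Some sx ->
  delta sx = (cnt sx + 1) %% T.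
Proof.
move=> hT; elim: t u sx => [|t IH] u sx /=.
  by case: (adv 0 u) => // -[<-] /=; rewrite modn_small //; lia.
case E: (config T e adv t u) => [sy|].
  by move=> [<-]; apply: fs_delta; apply: IH E.
by case: ifP => // _ [<-] /=; rewrite modn_small //; lia.
Qed.

Lemma act_some T (V : finType) e adv t (u : V) : active T e adv t u ->
  exists sx, config T e adv t u = Some sx.
Proof. by rewrite /active; case: (config _ _ _ _ _) => // sx _; exists sx. Qed.

Theorem mainTheorem10 (T : nat) (V : finType) (e : rel V)
    (adv : nat -> V -> bool) (v w : V) (t t' : nat) :
  4 <= T ->
  symmetric e -> irreflexive e -> (forall x y, connect e x y) ->
  e v w ->
  active T e adv t v -> active T e adv t w ->
  dist T e adv t v w <= 1 ->
  t < t' ->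
  1 < dist T e adv t' v w ->
  (forall s, t < s < t' -> dist T e adv s v w <= 1) ->
  dist T e adv t'.+1 v w <= 1.
Proof.
move=> hT esym _ _ evw av aw d0 tt' d1 dmid.
set s := t'.-1.
have Et : t' = s.+1 by rewrite /s; lia.
have ts : t <= s by lia.
have ds : dist T e adv s v w <= 1.
  have [<-|lt] : t = s \/ t < s by lia.
    by [].
  by apply: dmid; lia.
have [sv Hv] := act_some (cfg_mono (s - t) av); rewrite subnKC // in Hv.
have [sw Hw] := act_some (cfg_mono (s - t) aw); rewrite subnKC // in Hw.
move: d1 ds; rewrite Et /dist /vcounter.
set hv := [exists x, e v x && beeping (config T e adv s x)].
set hw := [exists x, e w x && beeping (config T e adv s x)].
have Hv1 := cfg_next Hv; have Hw1 := cfg_next Hw.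
rewrite -/hv in Hv1; rewrite -/hw in Hw1.
rewrite (cfg_next Hv1) (cfg_next Hw1) Hv1 Hw1 Hv Hw.
have iv := cfg_inv hT Hv; have iw := cfg_inv hT Hw.
have gen : forall a b (sa sb : node) ha hb, e a b ->
  config T e adv s a = Some sa -> config T e adv s b = Some sb ->
  config T e adv s.+1 a = Some (fs_step T sa ha) ->
  config T e adv s.+1 b = Some (fs_step T sb hb) ->
  forall x, 
  cnt sa = (cnt sb).+1 ->
  cnt (fs_step T sa ha) = cnt sa + 2 -> cnt (fs_step T sb hb) = cnt sb + 1 ->
  cnt (fs_step T (fs_step T sa ha) x) = cnt sa + 3 /\
  cnt (fs_step T (fs_step T sb hb)
     [exists x, e b x && beeping (config T e adv s.+1 x)]) = cnt sb + 3.
  move=> a b sa sb ha hb eab Ha Hb Ha1 Hb1 x hab c1 c2.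
  apply: key => //; [exact: cfg_inv hT Ha | exact: cfg_inv hT Hb |].
  move=> Hst; apply/existsP; exists a; rewrite esym eab Ha1 /beeping Hst.
  by [].
have [c1|c1] := fs_cnt T sv hv; have [c2|c2] := fs_cnt T sw hw.
- lia.
- move=> h1 h2.
  have hwv : cnt sw = (cnt sv).+1 by lia.
  have [] := gen w v sw sv hw hv _ Hw Hv Hw1 Hv1 [exists x, e w x && beeping (config T e adv s.+1 x)] hwv c2 c1.
    by rewrite esym.
  move=> A B; rewrite A B; lia.
- move=> h1 h2.
  have hvw : cnt sv = (cnt sw).+1 by lia.
  have [] := gen v w sv sw hv hw evw Hv Hw Hv1 Hw1 [exists x, e v x && beeping (config T e adv s.+1 x)] hvw c1 c2.
  move=> A B; rewrite A B; lia.
- lia.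
Qed.
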